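(* Let $A\in\mathbb{R}^{n\times n}$ be an invertible M-matrix, partitioned as $A=\begin{bmatrix} A_{11} & A_{12}\\ A_{21} & A_{22}\end{bmatrix}$ with square diagonal blocks $A_{11}\in\mathbb{R}^{k\times k}$, $A_{22}\in\mathbb{R}^{(n-k)\times(n-k)}$. Let $M_{11},N_{11}\in\mathbb{R}^{k\times k}$, $M_{22},N_{22}\in\mathbb{R}^{(n-k)\times(n-k)}$, $M_{21},N_{21}\in\mathbb{R}^{(n-k)\times k}$, and suppose that both pairs \[ M' = \begin{bmatrix} M_{11} & 0\\ M_{21} & M_{22}\end{bmatrix},\quad N' = \begin{bmatrix} N_{11} & -A_{12}\\ N_{21} & N_{22}\end{bmatrix} \qquad\text{and}\qquad \hat{M} = \begin{bmatrix} M_{11} & A_{12}\\ 0 & M_{22}\end{bmatrix},\quad \hat{N} = \begin{bmatrix} N_{11} & 0\\ -A_{21} & N_{22}\end{bmatrix} \] are regular splittings of $A$. Then $\rho(\hat{M}^{-1}\hat{N}) \leq \rho((M')^{-1}N')$.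
   Context: A regular splitting of $A$ is a pair $(M,N)$ with $M$ an invertible M-matrix, $N\geq 0$ entrywise, and $A=M-N$. $\rho(\cdot)$ denotes the spectral radius. *)

(* Defs.v *)
From HB Require Import structures.
From mathcomp Require Import all_boot all_order all_algebra.
From mathcomp Require Import reals.
From mathcomp Require Import complex.
Set Implicit Arguments. Unset Strict Implicit. Unset Printing Implicit Defensive.
Import Order.TTheory GRing.Theory Num.Theory.
Local Open Scope ring_scope.

(* The (complex) eigenvalues of a real square matrix, with algebraic
   multiplicity: the roots of the characteristic polynomial over R[i]. *)
Definition eigenvalues (R : realType) (n : nat) (A : 'M[R]_n) : seq R[i] :=
  sval (closed_field_poly_normal
          (char_poly (map_mx (fun x : R => (x%:C)%C) A))).

(* Spectral radius: max modulus of the (complex) eigenvalues (0 if n = 0). *)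
Definition spectral_radius (R : realType) (n : nat) (A : 'M[R]_n) : R :=
  \big[Num.max/0]_(z <- eigenvalues A) Normc.normc z.

Definition nonneg_mx (R : realType) (m n : nat) (A : 'M[R]_(m, n)) : Prop :=
  forall i j, 0 <= A i j.

Definition invertible_M_matrix (R : realType) (n : nat) (A : 'M[R]_n) : Prop :=
  exists (s : R) (B : 'M[R]_n),
    nonneg_mx B /\ spectral_radius B < s /\ A = s%:M - B.

Definition regular_splitting (R : realType) (n : nat) (A M N : 'M[R]_n) : Prop :=
  invertible_M_matrix M /\ nonneg_mx N /\ A = M - N.

(* Main.v *)
Require Import Defs.
From HB Require Import structures.
From mathcomp Require Import all_boot all_order all_algebra.
From mathcomp Require Import reals.
From mathcomp Require Import complex.
From mathcomp Require Import ring lra.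
From mathcomp Require Import classical_sets boolp.
Import Order.TTheory GRing.Theory Num.Theory.
Local Open Scope ring_scope.

Set Implicit Arguments. Unset Strict Implicit.
Section Aux.
Variable R : realType.

Definition Zmx n (A : 'M[R]_n) := forall i j, i != j -> A i j <= 0.
Definition mono n (A : 'M[R]_n) := A \in unitmx /\ nonneg_mx (invmx A).

Lemma Zpos n (Y : 'M[R]_n) (x : 'cV[R]_n) : Zmx Y -> (forall i, 0 <= x i 0) ->
  (forall i, 0 < (Y *m x) i 0) -> forall i, 0 < x i 0.
Proof.
move=> HZ Hx HY i; rewrite lt_def Hx andbT; apply/eqP => x0.
have := HY i; rewrite mxE; apply/negP; rewrite -leNgt.
apply: sumr_le0 => j _; have [<-|ij] := eqVneq i j; first by rewrite x0 mulr0.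
by rewrite mulr_le0_ge0 // HZ.
Qed.

Lemma Zmin n (Y : 'M[R]_n) (x : 'cV[R]_n) : Zmx Y -> (forall i, 0 <= x i 0) ->
  (forall i, 0 < (Y *m x) i 0) -> forall u : 'cV_n,
  (forall i, 0 <= (Y *m u) i 0) -> forall i, 0 <= u i 0.
Proof.
move=> HZ Hx HY u Hu i0; have xp := Zpos HZ Hx HY.
rewrite leNgt; apply/negP => ui0.
case: (@arg_minP _ _ _ i0 xpredT (fun i => u i 0 / x i 0) isT) => i _ Hi.
set t := u i 0 / x i 0.
have tn : t < 0.
  apply: (le_lt_trans (Hi i0 isT)); by rewrite pmulr_llt0 ?invr_gt0.
have ut : forall j, t * x j 0 <= u j 0.
  move=> j; have := Hi j isT; rewrite -/t => h.
  by rewrite -ler_pdivlMr.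
suff : (Y *m u) i 0 < 0 by rewrite ltNge Hu.
have -> : (Y *m u) i 0 = \sum_j Y i j * u j 0 by rewrite mxE.
apply: (le_lt_trans (y := \sum_j Y i j * (t * x j 0))).
  apply: ler_sum => j _; have [<-|ij] := eqVneq i j.
    by rewrite /t divfK // gt_eqF.
  by rewrite ler_wnM2l // HZ.
have -> : \sum_j Y i j * (t * x j 0) = t * (Y *m x) i 0.
  rewrite mxE mulr_sumr; apply: eq_bigr => j _; rewrite mulrCA //.
by rewrite -oppr_gt0 -mulNr mulr_gt0 // oppr_gt0.
Qed.

Lemma Zmono n (Y : 'M[R]_n) (x : 'cV[R]_n) : Zmx Y -> (forall i, 0 <= x i 0) ->
  (forall i, 0 < (Y *m x) i 0) -> mono Y.
Proof.
move=> HZ Hx HY; have Hm := Zmin HZ Hx HY.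
have HU : Y \in unitmx.
  rewrite unitmxE unitfE -det_tr; apply/negP => /det0P [v v0 vY].
  have Yv : Y *m v^T = 0 by rewrite -[Y]trmxK -trmx_mul vY trmx0.
  have h1 := Hm v^T; have h2 := Hm (- v^T).
  have z0 : forall i, 0 <= (0 : 'cV[R]_n) i 0 by move=> i; rewrite mxE.
  move/negP: v0; apply; apply/eqP/matrixP => a b.
  rewrite ord1 mxE; apply/eqP; rewrite eq_le.
  have := h2 _ b; rewrite mulmxN Yv oppr0 => /(_ z0).
  rewrite !mxE oppr_ge0 => ->.
  by have := h1 _ b; rewrite Yv => /(_ z0); rewrite mxE.
split => // i j.
have := Hm (invmx Y *m delta_mx j 0); rewrite mulmxA mulmxV // mul1mx => /(_ _ i).
rewrite -colE mxE; apply => a; rewrite !mxE; exact: ler0n.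
Qed.

Notation CT T := (map_mx (fun x : R => (x%:C)%C) T).

Lemma eig_root n (T : 'M[R]_n) z :
  (z \in eigenvalues T) = root (char_poly (CT T)) z.
Proof.
rewrite /eigenvalues; case: closed_field_poly_normal => r /= Hr.
by rewrite [in RHS]Hr (monicP (char_poly_monic _)) scale1r root_prod_XsubC.
Qed.

Lemma eig_vec n (T : 'M[R]_n) z : z \in eigenvalues T ->
  exists2 v : 'rV[R[i]]_n, v *m CT T = z *: v & v != 0.
Proof. by rewrite eig_root -eigenvalue_root_char => /eigenvalueP. Qed.

Lemma eig_le n (T : 'M[R]_n) z : z \in eigenvalues T ->
  Normc.normc z <= spectral_radius T.
Proof. move=> h; exact: (le_bigmax_seq _ _ xpredT). Qed.

Lemma rho_ge0 n (T : 'M[R]_n) : 0 <= spectral_radius T.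
Proof.
rewrite /spectral_radius; elim: (eigenvalues T) => [|a r IH]; first by rewrite big_nil.
by rewrite big_cons le_max IH orbT.
Qed.

Lemma normc_real (t : R) : Normc.normc (t%:C)%C = `|t|.
Proof. by rewrite /Normc.normc /= expr0n /= addr0 sqrtr_sqr. Qed.

Lemma unit_gt n (B : 'M[R]_n) t : spectral_radius B < t -> (t%:M - B) \in unitmx.
Proof.
move=> Ht; rewrite unitmxE unitfE; apply/negP => /det0P [v v0].
rewrite mulmxBr mul_mx_scalar => /eqP; rewrite subr_eq0 => /eqP Hv.
have : eigenvalue B t by apply/eigenvalueP; exists v.
rewrite -(eigenvalue_map (real_complex R)) eigenvalue_root_char => hr.
have := eig_le (z := (t%:C)%C) (T := B); rewrite eig_root => /(_ hr).
rewrite normc_real => h.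
have := rho_ge0 B => h0.
have : `|t| < t by apply: le_lt_trans Ht.
by rewrite ger0_norm ?ltxx //; apply: le_trans (ltW Ht).
Qed.


Lemma normc_ge0 (w : R[i]) : 0 <= Normc.normc w.
Proof. by case: w => a b; rewrite /Normc.normc sqrtr_ge0. Qed.

Lemma normc_sum (I : Type) (r : seq I) (F : I -> R[i]) :
  Normc.normc (\sum_(i <- r) F i) <= \sum_(i <- r) Normc.normc (F i).
Proof.
elim: r => [|a r IH]; first by rewrite !big_nil Normc.normc0.
rewrite !big_cons; apply: le_trans (le_normcD _ _) _; by rewrite lerD2l.
Qed.

Lemma dir2 n (T Y : 'M[R]_n) (al : R) : nonneg_mx T -> nonneg_mx Y -> 0 <= al ->
  (al%:M - T) *m Y = 1%:M -> forall z, z \in eigenvalues T -> Normc.normc z < al.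
Proof.
move=> HT HY ha HI z /eig_vec [v Hv v0].
rewrite ltNge; apply/negP => hz.
pose a := \row_j Normc.normc (v 0 j).
have a0 : forall j, 0 <= a 0 j by move=> j; rewrite mxE normc_ge0.
have Ha : forall j, Normc.normc z * a 0 j <= (a *m T) 0 j.
  move=> j; rewrite mxE -Normc.normcM.
  have -> : z * v 0 j = (v *m CT T) 0 j by rewrite Hv mxE.
  rewrite [(v *m _) 0 j]mxE [(a *m _) 0 j]mxE.
  apply: le_trans; first exact: normc_sum.
  apply: ler_sum => i _.
  by rewrite Normc.normcM !mxE normc_real ger0_norm.
have Hw : forall j, (a *m (al%:M - T)) 0 j <= 0.
  move=> j; rewrite mulmxBr mul_mx_scalar.
  have -> : (al *: a - a *m T) 0 j = al * a 0 j - (a *m T) 0 j by rewrite !mxE.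
  rewrite subr_le0.
  apply: le_trans (Ha j); by rewrite ler_wpM2r.
have Ha0 : forall j, a 0 j = 0.
  move=> j; apply/eqP; rewrite eq_le a0 andbT.
  have -> : a = a *m (al%:M - T) *m Y by rewrite -mulmxA HI mulmx1.
  rewrite mxE; apply: sumr_le0 => i _; exact: mulr_le0_ge0 (Hw i) (HY i j).
move/negP: v0; apply; apply/eqP/matrixP => i j; rewrite ord1 mxE.
by apply: Normc.eq0_normc; have := Ha0 j; rewrite mxE.
Qed.


Lemma ZsB n (B : 'M[R]_n) t : nonneg_mx B -> Zmx (t%:M - B).
Proof. by move=> HB i j ij; rewrite !mxE (negbTE ij) mulr0n sub0r oppr_le0. Qed.

Lemma shiftB n (B : 'M[R]_n) t u (x : 'cV[R]_n) :
  (u%:M - B) *m x = (t%:M - B) *m x + (u - t) *: x.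
Proof.
have -> : u%:M - B = (t%:M - B) + (u - t)%:M.
  apply/matrixP => i j; rewrite !mxE; case: (i == j) => /=.
    by rewrite !mulr1n addrAC subrKC.
  by rewrite !mulr0n addr0.
by rewrite mulmxDl mul_scalar_mx.
Qed.

Lemma le_sum_nn n (x : 'cV[R]_n) i : (forall j, 0 <= x j 0) -> x i 0 <= \sum_j x j 0.
Proof.
move=> h; rewrite (bigD1 i) //= lerDl; exact: sumr_ge0.
Qed.

Lemma nn_mul m n p (X : 'M[R]_(m, n)) (Y : 'M[R]_(n, p)) :
  nonneg_mx X -> nonneg_mx Y -> nonneg_mx (X *m Y).
Proof. move=> hX hY i j; rewrite mxE; apply: sumr_ge0 => k _; exact: mulr_ge0. Qed.

Lemma nn_one m n : nonneg_mx (const_mx 1 : 'M[R]_(m, n)).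
Proof. by move=> i j; rewrite mxE. Qed.

Lemma mono_vec n (Y : 'M[R]_n) : mono Y ->
  exists x : 'cV[R]_n, (forall i, 0 <= x i 0) /\ Y *m x = const_mx 1.
Proof.
case=> hu hn; exists (invmx Y *m const_mx 1); split.
  by move=> i; apply: nn_mul => //; exact: nn_one.
by rewrite mulmxA mulmxV // mul1mx.
Qed.

Lemma dir1_open n (B : 'M[R]_n) t : nonneg_mx B -> mono (t%:M - B) ->
  exists2 d, 0 < d & forall u, t - d <= u -> mono (u%:M - B).
Proof.
move=> HB /mono_vec [x [x0 Hx]].
pose S := \sum_j x j 0.
have S0 : 0 <= S by apply: sumr_ge0.
exists (1 / (1 + S)); first by rewrite divr_gt0 // ltr_pwDl.
move=> u hu; apply: (Zmono (x := x)) => //; first exact: ZsB.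
move=> i; rewrite (shiftB _ t) Hx !mxE.
have xi := le_sum_nn i x0; rewrite -/S in xi.
have hd : 1 / (1 + S) * (1 + S) = 1 by rewrite mul1r mulVf // gt_eqF // ltr_pwDl.
have d0 : 0 <= 1 / (1 + S) by rewrite divr_ge0 // addr_ge0.
move: hu hd d0; set d := 1 / (1 + S) => hu hd d0.
have h1 : 0 <= (d - (t - u)) * x i 0 by rewrite mulr_ge0 // ?x0 //; lra.
have h2 : 0 <= d * (S - x i 0) by rewrite mulr_ge0 // subr_ge0.
nra.
Qed.


Lemma le_sumF n (F : 'I_n -> R) i : (forall j, 0 <= F j) -> F i <= \sum_j F j.
Proof. move=> h; rewrite (bigD1 i) //= lerDl; exact: sumr_ge0. Qed.

Lemma dir1_closed n (B : 'M[R]_n) t : nonneg_mx B -> spectral_radius B < t ->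
  (forall u, t < u -> mono (u%:M - B)) -> mono (t%:M - B).
Proof.
move=> HB Ht Hu.
have hU := unit_gt Ht; set X := invmx (t%:M - B).
pose K := 1 + \sum_i \sum_j `|X i j|.
have K1 : 1 <= K by rewrite /K lerDl; apply: sumr_ge0 => i _; apply: sumr_ge0.
have K0 : 0 < K by apply: lt_le_trans K1.
pose N : R := n%:R.
have N0 : 0 <= N by exact: ler0n.
pose c := 1 / (3 * (N + 1)).
have hc : c * (3 * (N + 1)) = 1 by rewrite /c mul1r mulVf // mulf_neq0 // gt_eqF // ltr_pwDr.
have c0 : 0 < c by rewrite divr_gt0 // mulr_gt0 // ltr_pwDr.
pose e := c / K.
have e0 : 0 < e by rewrite divr_gt0.
have heK : e * K = c by rewrite /e divfK // gt_eqF.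
have he : t < t + e by rewrite ltrDl.
have [xv [xv0 Hxv]] := mono_vec (Hu (t + e) he).
pose w := e *: xv.
have w0 : forall j, 0 <= w j 0 by move=> j; rewrite mxE mulr_ge0 // ltW.
have Hw : (t%:M - B) *m xv = const_mx 1 - w.
  have := shiftB B t (t + e) xv; rewrite Hxv => ->.
  have -> : t + e - t = e by rewrite addrAC subrr add0r.
  by rewrite /w addrK.
have Hx : xv = X *m (const_mx 1 - w) by rewrite -Hw mulmxA mulVmx // mul1mx.
pose S := \sum_i w i 0.
have S0 : 0 <= S by apply: sumr_ge0.
have wS : forall j, w j 0 <= S.
  by move=> j; rewrite /S; exact: (le_sum_nn j w0).
have wb : forall i, w i 0 <= c * (1 + S).
  move=> i; rewrite /w mxE {1}Hx mxE -heK -mulrA ler_pM2l //.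
  apply: (le_trans (y := \sum_j `|X i j| * (1 + S))).
    apply: ler_sum => j _; rewrite !mxE.
    apply: le_trans (ler_norm _) _; rewrite normrM ler_wpM2l //.
    have := w0 j; have := wS j; rewrite /w mxE => h1 h2.
    rewrite ler_norml; apply/andP; split; lra.
  rewrite -mulr_suml ler_wpM2r ?addr_ge0 //.
  rewrite /K; apply: (le_trans (y := \sum_i0 \sum_j `|X i0 j|)); last by rewrite lerDr.
  rewrite [X in _ <= X](bigD1 i) //= lerDl; apply: sumr_ge0 => *; exact: sumr_ge0.
have SS : S <= N * (c * (1 + S)).
  rewrite /S; apply: (le_trans (y := \sum_(i < n) c * (1 + S))); first exact: ler_sum.
  by rewrite sumr_const card_ord mulr_natl.
have S12 : S <= 1 / 2.
  have h : N * c * 3 <= 1 by rewrite -hc; nra.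
  nra.
apply: (Zmono (x := xv)) => //; first exact: ZsB.
move=> i; rewrite Hw !mxE; have := wS i; rewrite /w mxE; lra.
Qed.


Lemma dir1 n (B : 'M[R]_n) s : nonneg_mx B -> spectral_radius B < s -> mono (s%:M - B).
Proof.
move=> HB Hs.
have [//|nP] := pselect (mono (s%:M - B)).
pose t0 := s + 1 + \sum_i \sum_j B i j.
have big_ok : forall u, t0 <= u -> mono (u%:M - B).
  move=> u hu; apply: (Zmono (x := const_mx 1)) => //; first exact: ZsB.
    by move=> i; rewrite mxE.
  move=> i; rewrite mulmxBl mul_scalar_mx !mxE.
  under eq_bigr => j _ do rewrite mxE mulr1.
  have h1 : \sum_j B i j <= \sum_i0 \sum_j B i0 j.
    rewrite [X in _ <= X](bigD1 i) //= lerDl; apply: sumr_ge0 => *; exact: sumr_ge0.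
  have h2 : 0 <= s by apply: le_trans (ltW Hs); exact: rho_ge0.
  rewrite mulr1; move: hu; rewrite /t0; lra.
pose Bad := [set u : R | s <= u /\ ~ mono (u%:M - B)]%classic.
have hB : has_sup Bad.
  split; first by exists s; split.
  exists t0 => u [_ hu]; rewrite leNgt; apply/negP => /ltW /big_ok //.
pose ts := sup Bad.
have hts : s <= ts by apply: sup_upper_bound hB _ _.
have Hup : forall u, ts < u -> mono (u%:M - B).
  move=> u hu; have [//|nu] := pselect (mono (u%:M - B)).
  have : Bad u by split => //; apply: le_trans (ltW hu).
  by move/(sup_upper_bound hB); rewrite leNgt hu.
have Hts : mono (ts%:M - B).
  apply: dir1_closed => //; exact: lt_le_trans hts.
have [d d0 Hd] := dir1_open HB Hts.
have [e [_ He] Hle] := sup_adherent d0 hB.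
by exfalso; apply: He; apply: Hd; exact: ltW.
Qed.


Lemma nn_block k l (X11 : 'M[R]_k) (X12 : 'M[R]_(k, l)) X21 (X22 : 'M[R]_l) :
  nonneg_mx X11 -> nonneg_mx X12 -> nonneg_mx X21 -> nonneg_mx X22 ->
  nonneg_mx (block_mx X11 X12 X21 X22).
Proof.
move=> h1 h2 h3 h4 i j.
case: (split_ordP i) => i' ->; case: (split_ordP j) => j' ->;
  by rewrite ?block_mxEul ?block_mxEur ?block_mxEdl ?block_mxEdr.
Qed.

Lemma nn_0 m n : nonneg_mx (0 : 'M[R]_(m, n)).
Proof. by move=> i j; rewrite mxE. Qed.

Lemma nn_1 n : nonneg_mx (1%:M : 'M[R]_n).
Proof. by move=> i j; rewrite mxE ler0n. Qed.

Lemma nn_add m n (X Y : 'M[R]_(m, n)) : nonneg_mx X -> nonneg_mx Y -> nonneg_mx (X + Y).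
Proof. by move=> h1 h2 i j; rewrite mxE addr_ge0. Qed.

Lemma nn_scale m n a (X : 'M[R]_(m, n)) : 0 <= a -> nonneg_mx X -> nonneg_mx (a *: X).
Proof. by move=> h1 h2 i j; rewrite mxE mulr_ge0. Qed.

Lemma Mmat n (M : 'M[R]_n) : invertible_M_matrix M -> mono M /\ Zmx M.
Proof.
case=> s [B [HB [Hs ->]]]; split; first exact: dir1.
exact: ZsB.
Qed.

Lemma key_block k l (al : R) (M11 N11 : 'M[R]_k) (M22 N22 : 'M[R]_l)
  (M21 N21 A21 : 'M[R]_(l, k)) (A12 : 'M[R]_(k, l)) : A21 = M21 - N21 ->
  (al *: block_mx M11 A12 0 M22 - block_mx N11 0 (- A21) N22)
    *m block_mx (al%:M) 0 0 1%:M
  = block_mx (al%:M) 0 0 1%:M *m (al *: block_mx M11 0 M21 M22 - block_mx N11 (- A12) N21 N22)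
    + block_mx 0 0 ((1 - al) *: N21) 0.
Proof.
move=> hA.
rewrite !scale_block_mx !opp_block_mx !add_block_mx !mulmx_block !add_block_mx.
rewrite !mulmx0 !mul0mx !mulmx1 !mul1mx !mul_mx_scalar !mul_scalar_mx !addr0 !add0r.
rewrite !scaler0 !oppr0 !addr0 !opprK hA.
congr block_mx; apply/matrixP => i j; rewrite !mxE; ring.
Qed.

End Aux.

Unset Implicit Arguments. Set Strict Implicit.

Theorem corollary3 (R : realType) (k l : nat)
  (A11 : 'M[R]_k) (A12 : 'M[R]_(k, l)) (A21 : 'M[R]_(l, k)) (A22 : 'M[R]_l)
  (M11 N11 : 'M[R]_k) (M22 N22 : 'M[R]_l) (M21 N21 : 'M[R]_(l, k)) :
  let A := block_mx A11 A12 A21 A22 in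
  let M' := block_mx M11 0 M21 M22 in
  let N' := block_mx N11 (- A12) N21 N22 in
  let Mh := block_mx M11 A12 0 M22 in
  let Nh := block_mx N11 0 (- A21) N22 in
  invertible_M_matrix A ->
  regular_splitting A M' N' ->
  regular_splitting A Mh Nh ->
  spectral_radius (invmx Mh *m Nh) <= spectral_radius (invmx M' *m N').
Proof.
move=> A M' N' Mh Nh HA [HM' [HN' HA']] [HMh [HNh HAh]].
have [[uA nA] _] := Mmat HA.
have [[uM' nM'] ZM'] := Mmat HM'.
have [[uMh nMh] ZMh] := Mmat HMh.
have nT' : nonneg_mx (invmx M' *m N') by exact: nn_mul.
have nTh : nonneg_mx (invmx Mh *m Nh) by exact: nn_mul.
rewrite {1}/spectral_radius big_seq.
apply: bigmax_le; first exact: rho_ge0.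
move=> z zin; set rho := spectral_radius _.
rewrite leNgt; apply/negP => hz.
have r0 : 0 <= rho by exact: rho_ge0.
pose al := (rho + Normc.normc z) / 2.
have al1 : rho < al by rewrite /al; lra.
have al2 : al < Normc.normc z by rewrite /al; lra.
have al0 : 0 < al by lra.
have [hal|hal] := leP 1 al.
  have hMh : Mh = A + Nh by rewrite HAh subrK.
  pose Y := invmx A *m Mh.
  have hY : Y = 1%:M + invmx A *m Nh by rewrite /Y hMh mulmxDr mulVmx.
  have nY : nonneg_mx Y.
    by rewrite hY; apply: nn_add; [exact: nn_1 | exact: nn_mul].
  have eY : (1%:M - invmx Mh *m Nh) *m Y = 1%:M.
    have -> : 1%:M - invmx Mh *m Nh = invmx Mh *m A by rewrite HAh mulmxBr mulVmx.
    by rewrite /Y mulmxA -(mulmxA (invmx Mh)) mulmxV // mulmx1 mulVmx.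
  have := dir2 nTh nY ler01 eY zin; lra.
have [uX nX] := dir1 nT' al1.
pose x : 'cV[R]_(k + l) := invmx (al%:M - invmx M' *m N') *m invmx M' *m const_mx 1.
have nx : nonneg_mx x by apply: nn_mul; [exact: nn_mul | exact: nn_one].
have hC' : (al *: M' - N') *m x = const_mx 1.
  have -> : al *: M' - N' = M' *m (al%:M - invmx M' *m N').
    by rewrite mulmxBr mul_mx_scalar mulmxA mulmxV // mul1mx.
  by rewrite /x !mulmxA -(mulmxA M') mulmxV // mulmx1 mulmxV // mul1mx.
have hA21 : A21 = M21 - N21.
  by move: HA'; rewrite /A /M' /N' opp_block_mx add_block_mx => /eq_block_mx [_ _ ->].
have nN21 : nonneg_mx N21.
  by move=> i j; have := HN' (rshift k i) (lshift l j); rewrite block_mxEdl.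
pose D := block_mx (al%:M) 0 0 (1%:M) : 'M[R]_(k + l).
pose E := block_mx 0 0 ((1 - al) *: N21) 0 : 'M[R]_(k + l).
have hkey : (al *: Mh - Nh) *m D = D *m (al *: M' - N') + E.
  exact: (key_block al M11 N11 M22 N22 A12 hA21).
have nD : nonneg_mx D.
  apply: nn_block; [|exact: nn_0|exact: nn_0|exact: nn_1].
  by rewrite -scalemx1; apply: nn_scale; [exact: ltW | exact: nn_1].
have nE : nonneg_mx E.
  apply: nn_block; [exact: nn_0|exact: nn_0| |exact: nn_0].
  apply: nn_scale => //; lra.
pose y := D *m x.
have ny : nonneg_mx y by exact: nn_mul.
have hy : (al *: Mh - Nh) *m y = D *m const_mx 1 + E *m x.
  by rewrite /y mulmxA hkey mulmxDl -mulmxA hC'.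
have Dii : forall i, 0 < D i i.
  move=> i; case: (split_ordP i) => i' ->.
    by rewrite block_mxEul mxE eqxx mulr1n.
  by rewrite block_mxEdr mxE eqxx mulr1n.
have Dpos : forall i, 0 < (D *m (const_mx 1 : 'cV[R]_(k + l))) i 0.
  move=> i; rewrite mxE (bigD1 i) //= [const_mx 1 i 0]mxE mulr1.
  apply: (lt_le_trans (Dii i)); rewrite lerDl; apply: sumr_ge0 => j _.
  by rewrite [const_mx 1 j 0]mxE mulr1; exact: nD.
have Zh : Zmx (al *: Mh - Nh).
  move=> i j ij; have -> : (al *: Mh - Nh) i j = al * Mh i j - Nh i j by rewrite !mxE.
  have := ZMh i j ij; have := HNh i j; nra.
have [uC nC] : mono (al *: Mh - Nh).
  apply: (Zmono (x := y)) => //.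
  move=> i; rewrite hy.
  have -> : (D *m const_mx 1 + E *m x) i 0 = (D *m (const_mx 1 : 'cV[R]_(k + l))) i 0 + (E *m x) i 0.
    by rewrite !mxE.
  apply: (lt_le_trans (Dpos i)); rewrite lerDl.
  have := nn_mul nE nx; exact.
set C := al *: Mh - Nh in uC nC.
pose Y := invmx C *m Mh.
have hY : Y = al^-1 *: (1%:M + invmx C *m Nh).
  have hC : C + Nh = al *: Mh by rewrite /C subrK.
  rewrite /Y -(mulVmx uC) -mulmxDr hC -scalemxAr scalerA mulVf ?scale1r //.
  by rewrite gt_eqF.
have nY : nonneg_mx Y.
  rewrite hY; apply: nn_scale; first by rewrite invr_ge0 ltW.
  by apply: nn_add; [exact: nn_1 | exact: nn_mul].
have eY : (al%:M - invmx Mh *m Nh) *m Y = 1%:M.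
  have -> : al%:M - invmx Mh *m Nh = invmx Mh *m C.
    by rewrite /C mulmxBr -scalemxAr mulVmx // scalemx1.
  by rewrite /Y mulmxA -(mulmxA (invmx Mh)) mulmxV // mulmx1 mulVmx.
have := dir2 nTh nY (ltW al0) eY zin; lra.
Qed.
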